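(* Let $\mathcal{X}_1,\mathcal{X}_2$ be non-empty sets, $\mathcal{B}_i\subseteq\mathcal{P}(\mathcal{X}_i)\setminus\{\emptyset\}$ and $\mathcal{D}_i$ a coherent set of desirable gambles on $\mathcal{X}_i$ for $i\in\{1,2\}$. Then $\mathcal{D}_1\otimes\mathcal{D}_2$ is an independent product of $\mathcal{D}_1$ and $\mathcal{D}_2$.
   Context: Gambles on a non-empty set $\mathcal{X}$ are bounded real functions; $\mathcal{G}(\mathcal{X})$ is the set of gambles, $\mathcal{G}_{>0}(\mathcal{X})$ the non-negative non-zero gambles, $\mathbb{I}_A$ the indicator of $A$. For $\mathcal{A}\subseteq\mathcal{G}(\mathcal{X})$: $\mathrm{posi}(\mathcal{A}):=\{\sum_{i=1}^n\lambda_if_i\colon n\in\mathbb{N},\lambda_i>0,f_i\in\mathcal{A}\}$, $\mathcal{E}(\mathcal{A}):=\mathrm{posi}(\mathcal{A}\cup\mathcal{G}_{>0}(\mathcal{X}))$. A coherent set of desirable gambles $\mathcal{D}\subseteq\mathcal{G}(\mathcal{X})$ satisfies, for all $f,g\in\mathcal{G}(\mathcal{X})$ and $\lambda>0$: (D1) $f\geq0,f\neq0\Rightarrow f\in\mathcal{D}$; (D2) $f\in\mathcal{D}\Rightarrow\lambda f\in\mathcal{D}$; (D3) $f,g\in\mathcal{D}\Rightarrow f+g\in\mathcal{D}$; (D4) $f\leq0\Rightarrow f\notin\mathcal{D}$. Gambles on $\mathcal{X}_i$ are identified with their cylindrical extensions to $\mathcal{X}_1\times\mathcal{X}_2$, events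 $B\subseteq\mathcal{X}_1$ with $B\times\mathcal{X}_2$ (similarly for $\mathcal{X}_2$). $\mathcal{D}_1\otimes\mathcal{D}_2:=\mathcal{E}(\mathcal{A}_{1\to2}\cup\mathcal{A}_{2\to1})$, where $\mathcal{A}_{1\to2}:=\{f_2(X_2)\mathbb{I}_{B_1}(X_1)\colon f_2\in\mathcal{D}_2,B_1\in\mathcal{B}_1\cup\{\mathcal{X}_1\}\}$ and $\mathcal{A}_{2\to1}:=\{f_1(X_1)\mathbb{I}_{B_2}(X_2)\colon f_1\in\mathcal{D}_1,B_2\in\mathcal{B}_2\cup\{\mathcal{X}_2\}\}$. For $\mathcal{D}$ on $\mathcal{X}_1\times\mathcal{X}_2$ and $\{i,j\}=\{1,2\}$: $\mathrm{marg}_i(\mathcal{D}):=\{f\in\mathcal{G}(\mathcal{X}_i)\colon f(X_i)\in\mathcal{D}\}$, $\mathrm{marg}_i(\mathcal{D}\rfloor B_j):=\{f\in\mathcal{G}(\mathcal{X}_i)\colon f(X_i)\mathbb{I}_{B_j}(X_j)\in\mathcal{D}\}$. A coherent $\mathcal{D}$ on $\mathcal{X}_1\times\mathcal{X}_2$ is epistemically independent if $\mathrm{marg}_i(\mathcal{D}\rfloor B_j)=\mathrm{marg}_i(\mathcal{D})$ for all $\{i,j\}=\{1,2\}$ and $B_j\in\mathcal{B}_j$. An independent product of $\mathcal{D}_1,\mathcal{D}_2$ is an epistemically independent coherent set of desirable gambles $\mathcal{D}$ on $\mathcal{X}_1\times\mathcal{X}_2$ with $\mathrm{marg}_1(\mathcal{D})=\mathcal{D}_1$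 and $\mathrm{marg}_2(\mathcal{D})=\mathcal{D}_2$. *)

(* Defs.v *)
From Stdlib Require Import Reals List ClassicalEpsilon.
Open Scope R_scope.
Set Implicit Arguments.

Definition gset (X : Type) := (X -> R) -> Prop.

Definition bounded {X : Type} (f : X -> R) : Prop :=
  exists M : R, forall x, Rabs (f x) <= M.

Definition Gpos {X : Type} : gset X := fun f =>
  bounded f /\ (forall x, 0 <= f x) /\ (exists x, f x <> 0).

Definition posi {X : Type} (A : gset X) : gset X := fun f =>
  exists l : list (R * (X -> R)),
    l <> nil /\
    Forall (fun p => 0 < fst p /\ A (snd p)) l /\
    f = (fun x => fold_right (fun p acc => fst p * snd p x + acc) 0 l).

Definition gunion {X : Type} (A B : gset X) : gset X := fun f => A f \/ B f.

Definition natext {X : Type} (A : gset X) : gset X := posi (gunion A Gpos).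

Definition coherent {X : Type} (D : gset X) : Prop :=
  (forall f, D f -> bounded f) /\
  (forall f, bounded f -> (forall x, 0 <= f x) -> (exists x, f x <> 0) -> D f) /\
  (forall f (lam : R), D f -> 0 < lam -> D (fun x => lam * f x)) /\
  (forall f g, D f -> D g -> D (fun x => f x + g x)) /\
  (forall f, bounded f -> (forall x, f x <= 0) -> ~ D f).

Definition ind {X : Type} (B : X -> Prop) (x : X) : R :=
  if excluded_middle_informative (B x) then 1 else 0.

Definition A12 {X1 X2 : Type} (Bs1 : (X1 -> Prop) -> Prop) (D2 : gset X2)
  : gset (X1 * X2) := fun h =>
  exists (f2 : X2 -> R) (B1 : X1 -> Prop),
    D2 f2 /\ (Bs1 B1 \/ B1 = (fun _ => True)) /\
    h = (fun z => f2 (snd z) * ind B1 (fst z)).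

Definition A21 {X1 X2 : Type} (Bs2 : (X2 -> Prop) -> Prop) (D1 : gset X1)
  : gset (X1 * X2) := fun h =>
  exists (f1 : X1 -> R) (B2 : X2 -> Prop),
    D1 f1 /\ (Bs2 B2 \/ B2 = (fun _ => True)) /\
    h = (fun z => f1 (fst z) * ind B2 (snd z)).

Definition indep_natext {X1 X2 : Type}
  (Bs1 : (X1 -> Prop) -> Prop) (Bs2 : (X2 -> Prop) -> Prop)
  (D1 : gset X1) (D2 : gset X2) : gset (X1 * X2) :=
  natext (gunion (A12 Bs1 D2) (A21 Bs2 D1)).

Definition marg1 {X1 X2 : Type} (D : gset (X1 * X2)) : gset X1 :=
  fun f => bounded f /\ D (fun z => f (fst z)).
Definition marg2 {X1 X2 : Type} (D : gset (X1 * X2)) : gset X2 :=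
  fun f => bounded f /\ D (fun z => f (snd z)).
Definition marg1_cond {X1 X2 : Type} (D : gset (X1 * X2)) (B2 : X2 -> Prop)
  : gset X1 := fun f => bounded f /\ D (fun z => f (fst z) * ind B2 (snd z)).
Definition marg2_cond {X1 X2 : Type} (D : gset (X1 * X2)) (B1 : X1 -> Prop)
  : gset X2 := fun f => bounded f /\ D (fun z => f (snd z) * ind B1 (fst z)).

Definition gset_eq {X : Type} (A B : gset X) : Prop := forall f, A f <-> B f.

Definition epist_indep {X1 X2 : Type}
  (Bs1 : (X1 -> Prop) -> Prop) (Bs2 : (X2 -> Prop) -> Prop)
  (D : gset (X1 * X2)) : Prop :=
  coherent D /\
  (forall B2, Bs2 B2 -> gset_eq (marg1_cond D B2) (marg1 D)) /\
  (forall B1, Bs1 B1 -> gset_eq (marg2_cond D B1) (marg2 D)).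

Definition indep_product {X1 X2 : Type}
  (Bs1 : (X1 -> Prop) -> Prop) (Bs2 : (X2 -> Prop) -> Prop)
  (D1 : gset X1) (D2 : gset X2) (D : gset (X1 * X2)) : Prop :=
  epist_indep Bs1 Bs2 D /\ gset_eq (marg1 D) D1 /\ gset_eq (marg2 D) D2.

(* Main.v *)
Require Import Defs.
From Stdlib Require Import Reals Lra List Classical ClassicalEpsilon FunctionalExtensionality.
Import Defs.
Open Scope R_scope.

Definition ev {A : Type} (mu : list (R * A)) (phi : A -> R) : R :=
  fold_right (fun q acc => fst q * phi (snd q) + acc) 0 mu.

Lemma ev_nil {A} (phi : A -> R) : ev nil phi = 0.
Proof. reflexivity. Qed.
Lemma ev_cons {A} (q : R * A) mu phi : ev (q :: mu) phi = fst q * phi (snd q) + ev mu phi.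
Proof. reflexivity. Qed.

Lemma ev_ext {A} (mu : list (R*A)) phi psi : (forall a, phi a = psi a) -> ev mu phi = ev mu psi.
Proof. intros H; induction mu as [|q mu IH]; [reflexivity|]. rewrite !ev_cons, H, IH; reflexivity. Qed.

Lemma ev_lin {A} (mu : list (R*A)) c phi psi :
  ev mu (fun a => c * phi a + psi a) = c * ev mu phi + ev mu psi.
Proof. induction mu as [|q mu IH]; [rewrite !ev_nil; ring|]. rewrite !ev_cons, IH; ring. Qed.

Lemma ev_mull {A} (mu : list (R*A)) c phi : ev mu (fun a => c * phi a) = c * ev mu phi.
Proof. induction mu as [|q mu IH]; [rewrite !ev_nil; ring|]. rewrite !ev_cons, IH; ring. Qed.

Lemma ev_mulr {A} (mu : list (R*A)) c phi : ev mu (fun a => phi a * c) = ev mu phi * c.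
Proof. induction mu as [|q mu IH]; [rewrite !ev_nil; ring|]. rewrite !ev_cons, IH; ring. Qed.

Lemma ev_zero {A} (mu : list (R*A)) : ev mu (fun _ => 0) = 0.
Proof. induction mu as [|q mu IH]; [reflexivity|]. rewrite !ev_cons, IH; ring. Qed.

Lemma ev_app {A} (m1 m2 : list (R*A)) phi : ev (m1 ++ m2) phi = ev m1 phi + ev m2 phi.
Proof. induction m1 as [|q m1 IH]; simpl app; [rewrite ev_nil; ring|]. rewrite !ev_cons, IH; ring. Qed.

Lemma ev_scale {A} (mu : list (R*A)) K phi :
  ev (map (fun q => (K * fst q, snd q)) mu) phi = K * ev mu phi.
Proof. induction mu as [|q mu IH]; simpl map; [rewrite !ev_nil; ring|]. rewrite !ev_cons, IH; simpl; ring. Qed.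

Lemma ev_nonneg {A} (mu : list (R*A)) phi : Forall (fun q => 0 < fst q) mu ->
  (forall a, 0 <= phi a) -> 0 <= ev mu phi.
Proof.
  intros Hf H; induction mu as [|q mu IH]; [rewrite ev_nil; lra|].
  apply Forall_cons_iff in Hf as [H1 H2]. rewrite ev_cons.
  specialize (IH H2). specialize (H (snd q)). nra.
Qed.

Lemma ev_nonpos {A} (mu : list (R*A)) phi : Forall (fun q => 0 < fst q) mu ->
  (forall a, phi a <= 0) -> ev mu phi <= 0.
Proof.
  intros Hf H; induction mu as [|q mu IH]; [rewrite ev_nil; lra|].
  apply Forall_cons_iff in Hf as [H1 H2]. rewrite ev_cons.
  specialize (IH H2). specialize (H (snd q)). nra.
Qed.

Definition Hfam {X : Type} (fs : list (X -> R)) : Prop :=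
  forall lam : list (R * (X -> R)), lam <> nil ->
    Forall (fun p => 0 < fst p /\ In (snd p) fs) lam ->
    exists x, 0 < ev lam (fun g => g x).

Definition Tr {X : Type} (f : X -> R) (g : X -> R) (x' : X + (X * X)) : R :=
  match x' with
  | inl x => if Rle_dec 0 (f x) then g x else 0
  | inr (x, y) => if Rlt_dec 0 (f x) then
                    if Rlt_dec (f y) 0 then (- f y) * g x + f x * g y else 0
                  else 0
  end.

Lemma Tr_lin {X} (f : X -> R) c g h x' :
  Tr f (fun x => c * g x + h x) x' = c * Tr f g x' + Tr f h x'.
Proof.
  destruct x' as [x|[x y]]; simpl;
  repeat (destruct (Rle_dec _ _)); repeat (destruct (Rlt_dec _ _)); ring.
Qed.

Lemma Tr_ext {X} (f : X -> R) g h x' : (forall x, g x = h x) -> Tr f g x' = Tr f h x'.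
Proof. intros H. destruct x' as [x|[x y]]; simpl; rewrite ?H; reflexivity. Qed.

Lemma Tr_zero {X} (f : X -> R) x' : Tr f (fun _ => 0) x' = 0.
Proof.
  destruct x' as [x|[x y]]; simpl;
  repeat (destruct (Rle_dec _ _)); repeat (destruct (Rlt_dec _ _)); ring.
Qed.

Lemma lift_lam {X} (f : X -> R) (fs0 : list (X -> R)) (lam' : list (R * ((X + X*X) -> R))) :
  Forall (fun p => 0 < fst p /\ In (snd p) (map (Tr f) fs0)) lam' ->
  exists lam : list (R * (X -> R)),
    (lam' <> nil -> lam <> nil) /\
    Forall (fun p => 0 < fst p /\ In (snd p) fs0) lam /\
    forall x', ev lam' (fun g => g x') = Tr f (fun x => ev lam (fun g => g x)) x'.
Proof.
  induction lam' as [|[w g'] lam' IH]; intros Hf.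
  - exists nil. split; [congruence|]. split; [constructor|].
    intros x'. rewrite ev_nil. rewrite <- (Tr_zero f x'). apply Tr_ext. intros; reflexivity.
  - apply Forall_cons_iff in Hf as [[Hw Hin] Hf]. simpl in Hw, Hin.
    apply in_map_iff in Hin as [g [Hg Hin]].
    destruct (IH Hf) as [lam [_ [Hall Heq]]].
    exists ((w, g) :: lam). split; [congruence|]. split.
    + constructor; [simpl; auto|exact Hall].
    + intros x'. rewrite ev_cons. cbn [fst snd]. rewrite Heq, <- Hg.
      rewrite <- Tr_lin. apply Tr_ext. intros x. reflexivity.
Qed.

Lemma div_le_inv a u v : 0 < a -> u / a <= v -> u <= v * a.
Proof.
  intros Ha H. assert (E : u = (u / a) * a) by (field; lra). rewrite E at 1.
  apply Rmult_le_compat_r; lra.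
Qed.

Lemma le_div a u v : 0 < a -> v * a <= u -> v <= u / a.
Proof.
  intros Ha H. assert (E : v = (v * a) / a) by (field; lra). rewrite E.
  unfold Rdiv. apply Rmult_le_compat_r; [left; apply Rinv_0_lt_compat; lra| exact H].
Qed.

Lemma le_div_inv a u v : 0 < a -> v <= u / a -> v * a <= u.
Proof.
  intros Ha H. assert (E : u = (u / a) * a) by (field; lra). rewrite E.
  apply Rmult_le_compat_r; lra.
Qed.

Lemma find_t {X} (f G : X -> R) (x0 : X) : 0 < f x0 ->
  (forall x', Tr f G x' <= 0) ->
  exists t, 0 <= t /\ forall x, G x + t * f x <= 0.
Proof.
  intros Hx0 HT.
  assert (hP : forall x, 0 <= f x -> G x <= 0).
  { intros x Hx. specialize (HT (inl x)). simpl in HT. destruct (Rle_dec 0 (f x)); [exact HT| contradiction]. }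
  assert (hPN : forall x y, 0 < f x -> f y < 0 -> G y / (- f y) <= - G x / f x).
  { intros x y Hx Hy. specialize (HT (inr (x, y))). simpl in HT.
    destruct (Rlt_dec 0 (f x)); [|contradiction]. destruct (Rlt_dec (f y) 0); [|contradiction].
    set (a := - f y) in *. set (b := f x) in *.
    assert (Ha : 0 < a) by (unfold a; lra).
    assert (H3 : (a * G x + b * G y) * (/ a * / b) <= 0).
    { assert (Hc : 0 < / a * / b) by (apply Rmult_lt_0_compat; apply Rinv_0_lt_compat; lra).
      assert (H4 : 0 <= - (a * G x + b * G y) * (/ a * / b)) by (apply Rmult_le_pos; lra).
      lra. }
    replace ((a * G x + b * G y) * (/ a * / b)) with (G x / b + G y / a) in H3 by (field; lra).
    replace (- G x / b) with (- (G x / b)) by (field; lra). lra. }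
  set (E := fun r => r = 0 \/ exists y, f y < 0 /\ r = G y / (- f y)).
  assert (HEb : bound E).
  { exists (- G x0 / f x0). intros r [Hr|[y [Hy Hr]]].
    - subst r. apply le_div; [lra|]. specialize (hP x0 ltac:(lra)). lra.
    - subst r. apply hPN; auto. }
  destruct (completeness E HEb) as [m [Hub Hlub]]; [exists 0; left; reflexivity|].
  exists m. split; [apply Hub; left; reflexivity|].
  intros x. destruct (Rtotal_order (f x) 0) as [Hlt|[Heq|Hgt]].
  - assert (H1 : G x / (- f x) <= m) by (apply Hub; right; exists x; split; auto).
    apply div_le_inv in H1; [|lra]. nra.
  - rewrite Heq. specialize (hP x ltac:(lra)). lra.
  - assert (H1 : m <= - G x / f x).
    { apply Hlub. intros r [Hr|[y [Hy Hr]]].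
      - subst r. apply le_div; [lra|]. specialize (hP x ltac:(lra)). lra.
      - subst r. apply hPN; auto. }
    apply le_div_inv in H1; [|lra]. lra.
Qed.

Definition Bk {X : Type} (f : X -> R) (q : R * (X + X * X)) : list (R * X) :=
  match snd q with
  | inl x => if Rle_dec 0 (f x) then (fst q, x) :: nil else nil
  | inr (x, y) => if Rlt_dec 0 (f x) then
                    if Rlt_dec (f y) 0 then (fst q * - f y, x) :: (fst q * f x, y) :: nil else nil
                  else nil
  end.

Lemma ev_Bk {X} (f : X -> R) (mu' : list (R * (X + X*X))) g :
  ev (flat_map (Bk f) mu') g = ev mu' (Tr f g).
Proof.
  induction mu' as [|[w [x|[x y]]] mu' IH]; [reflexivity| |];
  simpl flat_map; rewrite ev_app, IH, ev_cons; unfold Bk, Tr; cbn [fst snd];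
  repeat (destruct (Rle_dec _ _)); repeat (destruct (Rlt_dec _ _));
  rewrite ?ev_cons, ?ev_nil; cbn [fst snd]; ring.
Qed.

Lemma Bk_pos {X} (f : X -> R) (mu' : list (R * (X + X*X))) :
  Forall (fun q => 0 < fst q) mu' -> Forall (fun q => 0 < fst q) (flat_map (Bk f) mu').
Proof.
  induction mu' as [|[w [x|[x y]]] mu' IH]; intros H; [constructor| |];
  apply Forall_cons_iff in H as [H1 H2]; cbn [fst] in H1;
  simpl flat_map; apply Forall_app; split; auto; unfold Bk; cbn [fst snd];
  repeat (destruct (Rle_dec _ _)); repeat (destruct (Rlt_dec _ _));
  repeat constructor; cbn [fst]; try apply Rmult_lt_0_compat; lra.
Qed.

Lemma Tr_self_nonneg {X} (f : X -> R) x' : 0 <= Tr f f x'.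
Proof.
  destruct x' as [x|[x y]]; simpl;
  repeat (destruct (Rle_dec _ _)); repeat (destruct (Rlt_dec _ _)); try lra.
  all: replace (- f y * f x + f x * f y) with 0 by ring; lra.
Qed.

Lemma choose_K {X} (mu : list (R*X)) (x0 : X) (L : list (X -> R)) :
  (forall g, In g L -> 0 < ev mu g) ->
  exists K, 0 < K /\ forall K', K <= K' -> forall g, In g L -> 0 < K' * ev mu g + g x0.
Proof.
  induction L as [|g L IH]; intros H.
  - exists 1. split; [lra| intros; contradiction].
  - destruct IH as [K [HK HK']]; [intros; apply H; right; auto|].
    assert (Hg : 0 < ev mu g) by (apply H; left; auto).
    assert (Hq : 0 <= Rabs (g x0) / ev mu g).
    { unfold Rdiv; apply Rmult_le_pos; [apply Rabs_pos| left; apply Rinv_0_lt_compat; auto]. }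
    exists (K + Rabs (g x0) / ev mu g). split; [lra|].
    intros K' HK'' g' [<-|Hin].
    + assert (H0 : (K + Rabs (g x0) / ev mu g) * ev mu g <= K' * ev mu g)
        by (apply Rmult_le_compat_r; lra).
      replace ((K + Rabs (g x0) / ev mu g) * ev mu g) with (K * ev mu g + Rabs (g x0)) in H0
        by (field; lra).
      pose proof (Rle_abs (- g x0)) as H5. rewrite Rabs_Ropp in H5.
      assert (0 < K * ev mu g) by (apply Rmult_lt_0_compat; auto). lra.
    + apply HK'; [lra| auto].
Qed.

Lemma minimax : forall n (X : Type) (fs : list (X -> R)), length fs = n -> Hfam fs ->
  exists mu : list (R * X), Forall (fun q => 0 < fst q) mu /\ forall g, In g fs -> 0 < ev mu g.
Proof.
  induction n as [|n IH]; intros X fs Hlen Hfs.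
  - destruct fs; [|discriminate]. exists nil. split; [constructor| intros g []].
  - destruct fs as [|f fs0]; [discriminate|]. simpl in Hlen. injection Hlen as Hlen.
    destruct (Hfs ((1, f) :: nil)) as [x0 Hx0]; [discriminate| |].
    { constructor; [simpl; split; [lra| left; auto]| constructor]. }
    rewrite ev_cons, ev_nil in Hx0. cbn [fst snd] in Hx0.
    assert (Hf0 : 0 < f x0) by lra.
    assert (H' : Hfam (map (Tr f) fs0)).
    { intros lam' Hne Hall.
      destruct (lift_lam f fs0 lam' Hall) as [lam [Hne' [Hall' Heq]]].
      apply NNPP; intros Hno.
      assert (Hle : forall x', Tr f (fun x => ev lam (fun g => g x)) x' <= 0).
      { intros x'. rewrite <- Heq. apply Rnot_lt_le. intros Hlt. apply Hno. exists x'. exact Hlt. }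
      destruct (find_t f _ x0 Hf0 Hle) as [t [Ht Htall]].
      destruct (Rle_lt_or_eq_dec 0 t Ht) as [Htp | Ht0].
      - destruct (Hfs ((t, f) :: lam)) as [x Hx]; [discriminate| |].
        + constructor; [simpl; split; [auto| left; auto]|].
          eapply Forall_impl; [|exact Hall']. intros p [? ?]; split; [auto| right; auto].
        + rewrite ev_cons in Hx; cbn [fst snd] in Hx. specialize (Htall x). lra.
      - destruct (Hfs lam) as [x Hx]; [auto| |].
        + eapply Forall_impl; [|exact Hall']. intros p [? ?]; split; [auto| right; auto].
        + specialize (Htall x). subst t. lra. }
    assert (Hl' : length (map (Tr f) fs0) = n) by (rewrite length_map; auto).
    destruct (IH _ (map (Tr f) fs0) Hl' H') as [mu' [Hpos' Hmu']].
    set (Bmu := flat_map (Bk f) mu').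
    assert (HB : forall g, In g fs0 -> 0 < ev Bmu g).
    { intros g Hg. unfold Bmu. rewrite ev_Bk. apply Hmu'. apply in_map; auto. }
    assert (HBf : 0 <= ev Bmu f).
    { unfold Bmu. rewrite ev_Bk. apply ev_nonneg; auto. intros; apply Tr_self_nonneg. }
    destruct (choose_K Bmu x0 fs0 HB) as [K [HK HK']].
    exists (map (fun q => (K * fst q, snd q)) Bmu ++ (1, x0) :: nil). split.
    + apply Forall_app; split.
      * apply Forall_map. eapply Forall_impl; [|apply Bk_pos; exact Hpos'].
        intros q Hq. cbn [fst]. apply Rmult_lt_0_compat; auto.
      * repeat constructor. cbn [fst]. lra.
    + intros g Hg. rewrite ev_app, ev_scale, ev_cons, ev_nil. cbn [fst snd].
      destruct Hg as [<-|Hg].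
      * assert (0 <= K * ev Bmu f) by (apply Rmult_le_pos; lra). lra.
      * specialize (HK' K (Rle_refl _) g Hg). lra.
Qed.

Lemma ind01 {X} (B : X -> Prop) x : ind B x = 0 \/ ind B x = 1.
Proof. unfold ind; destruct (excluded_middle_informative (B x)); auto. Qed.

Lemma ind_in {X} (B : X -> Prop) x : B x -> ind B x = 1.
Proof. intros H; unfold ind; destruct (excluded_middle_informative (B x)); tauto. Qed.

Lemma ind_nonneg {X} (B : X -> Prop) x : 0 <= ind B x.
Proof. destruct (ind01 B x) as [->| ->]; lra. Qed.

Lemma Rabs_mul_ind {X} (B : X -> Prop) x a : Rabs (a * ind B x) <= Rabs a.
Proof. destruct (ind01 B x) as [->| ->]; rewrite ?Rmult_0_r, ?Rmult_1_r, ?Rabs_R0;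
  [apply Rabs_pos| lra]. Qed.

Lemma coh_bounded {X} (D : gset X) : coherent D -> forall f, D f -> bounded f.
Proof. intros H; apply H. Qed.
Lemma coh_pos {X} (D : gset X) : coherent D -> forall f, bounded f -> (forall x, 0 <= f x) -> (exists x, f x <> 0) -> D f.
Proof. intros H; apply H. Qed.
Lemma coh_scale {X} (D : gset X) : coherent D -> forall f lam, D f -> 0 < lam -> D (fun x => lam * f x).
Proof. intros H; apply H. Qed.
Lemma coh_add {X} (D : gset X) : coherent D -> forall f g, D f -> D g -> D (fun x => f x + g x).
Proof. intros H; apply H. Qed.
Lemma coh_ext {X} (D : gset X) f g : D f -> (forall x, f x = g x) -> D g.
Proof. intros H E. replace g with f; auto. apply functional_extensionality; auto. Qed.

Lemma coh_possome {X} (D : gset X) : coherent D -> forall f, D f -> exists x, 0 < f x.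
Proof.
  intros H f Hf. apply NNPP; intros Hn.
  destruct H as [H1 [_ [_ [_ H5]]]]. apply (H5 f (H1 f Hf)); auto.
  intros x. apply Rnot_lt_le. intros Hx. apply Hn. exists x; auto.
Qed.

Lemma bounded_ind {X} (B : X -> Prop) : bounded (ind B).
Proof. exists 1. intros x. destruct (ind01 B x) as [->| ->]; rewrite ?Rabs_R0, ?Rabs_R1; lra. Qed.

Lemma coh_ind {X} (D : gset X) : coherent D -> forall B, (exists x, B x) -> D (ind B).
Proof.
  intros H B [x Hx]. apply (coh_pos D H); [apply bounded_ind| apply ind_nonneg|].
  exists x. rewrite ind_in by auto. lra.
Qed.

Lemma coh_comb {X} (D : gset X) : coherent D -> forall lam : list (R * (X -> R)), lam <> nil ->
  Forall (fun p => 0 < fst p /\ D (snd p)) lam -> D (fun x => ev lam (fun g => g x)).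
Proof.
  intros H lam. induction lam as [|p lam IH]; intros Hne Hall; [congruence|].
  apply Forall_cons_iff in Hall as [[Hp HD] Hall].
  destruct lam as [|p' lam'].
  - apply (coh_ext D (fun x => fst p * snd p x)); [apply (coh_scale D H); auto|].
    intros x. rewrite ev_cons, ev_nil. ring.
  - apply (coh_ext D (fun x => fst p * snd p x + ev (p' :: lam') (fun g => g x))).
    + apply (coh_add D H); [apply (coh_scale D H); auto| apply IH; [congruence| auto]].
    + intros x. rewrite ev_cons. reflexivity.
Qed.

Lemma Hfam_of {X} (D : gset X) : coherent D -> forall fs, Forall D fs -> Hfam fs.
Proof.
  intros H fs Hfs lam Hne Hall. apply (coh_possome D H). apply (coh_comb D H); auto.
  eapply Forall_impl; [|exact Hall]. intros p [Hp Hin]. split; auto.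
  rewrite Forall_forall in Hfs. auto.
Qed.

Lemma bounded_comb {X} (lam : list (R * (X -> R))) :
  Forall (fun p => bounded (snd p)) lam -> bounded (fun x => ev lam (fun g => g x)).
Proof.
  induction lam as [|p lam IH]; intros Hall.
  - exists 0. intros x. rewrite ev_nil, Rabs_R0. lra.
  - apply Forall_cons_iff in Hall as [[M HM] Hall]. destruct (IH Hall) as [M' HM'].
    exists (Rabs (fst p) * M + M'). intros x. rewrite ev_cons.
    eapply Rle_trans; [apply Rabs_triang|]. rewrite Rabs_mult.
    specialize (HM (snd (p, x))). specialize (HM' x). cbn in HM.
    assert (Rabs (fst p) * Rabs (snd p x) <= Rabs (fst p) * M)
      by (apply Rmult_le_compat_l; [apply Rabs_pos| auto]).
    lra.
Qed.

Definition Cl {Z : Type} (DZ : gset Z) (F : Z -> R) : Prop :=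
  (exists d, DZ d /\ forall z, d z <= F z) \/ ((forall z, 0 <= F z) /\ exists z, 0 < F z).

Lemma Cl_ext {Z} (DZ : gset Z) F G : Cl DZ F -> (forall z, F z = G z) -> Cl DZ G.
Proof.
  intros [[d [Hd Hle]]|[Hn [z0 Hz]]] E.
  - left; exists d; split; auto. intros w; rewrite <- E; auto.
  - right; split; [intros w; rewrite <- E; auto| exists z0; rewrite <- E; auto].
Qed.

Lemma Cl_add_nonneg {Z} (DZ : gset Z) F G : Cl DZ F -> (forall z, 0 <= G z) -> Cl DZ (fun z => F z + G z).
Proof.
  intros [[d [Hd Hle]]|[Hn [z0 Hz]]] HG.
  - left; exists d; split; auto. intros z; specialize (Hle z); specialize (HG z); lra.
  - right; split; [intros w; specialize (Hn w); specialize (HG w); lra|].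
    exists z0; specialize (HG z0); lra.
Qed.

Lemma Cl_add {Z} (DZ : gset Z) : coherent DZ -> forall F G, Cl DZ F -> Cl DZ G -> Cl DZ (fun z => F z + G z).
Proof.
  intros H F G HF HG.
  destruct HG as [[d [Hd Hle]]|[Hn Hz]].
  - destruct HF as [[d' [Hd' Hle']]|[Hn' Hz']].
    + left; exists (fun z => d' z + d z); split; [apply (coh_add DZ H); auto|].
      intros z; specialize (Hle z); specialize (Hle' z); lra.
    + left; exists d; split; auto. intros z; specialize (Hle z); specialize (Hn' z); lra.
  - apply Cl_add_nonneg; auto.
Qed.

Lemma Cl_pos {Z} (DZ : gset Z) : coherent DZ -> forall F, Cl DZ F -> exists z, 0 < F z.
Proof.
  intros H F [[d [Hd Hle]]|[Hn Hz]]; auto.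
  destruct (coh_possome DZ H d Hd) as [z Hz]. exists z. specialize (Hle z). lra.
Qed.

Lemma Cl_in {Z} (DZ : gset Z) : coherent DZ -> forall F, bounded F -> Cl DZ F -> DZ F.
Proof.
  intros H F HbF [[d [Hd Hle]]|[Hn [z Hz]]].
  - destruct (classic (exists z, F z - d z <> 0)) as [Hex|Hnex].
    + apply (coh_ext DZ (fun z => d z + (F z - d z))); [|intros; ring].
      apply (coh_add DZ H); auto. apply (coh_pos DZ H); auto.
      * destruct HbF as [M HM]. destruct (coh_bounded DZ H d Hd) as [M' HM'].
        exists (M + M'). intros x. unfold Rminus. eapply Rle_trans; [apply Rabs_triang|].
        rewrite Rabs_Ropp. specialize (HM x); specialize (HM' x); lra.
      * intros x; specialize (Hle x); lra.
    + apply (coh_ext DZ d); auto. intros x. apply NNPP; intros Hne. apply Hnex.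
      exists x. lra.
  - apply (coh_pos DZ H); auto. exists z; lra.
Qed.

Definition TA {Y Z : Type} (DZ : gset Z) (k : Y -> Z -> R) : Prop :=
  exists g B, DZ g /\ (exists y, B y) /\ forall y z, k y z = g z * ind B y.
Definition TB {Y Z : Type} (DY : gset Y) (k : Y -> Z -> R) : Prop :=
  exists f C, DY f /\ (exists z, C z) /\ forall y z, k y z = f y * ind C z.
Definition TG {Y Z : Type} (k : Y -> Z -> R) : Prop :=
  (exists M, forall y z, Rabs (k y z) <= M) /\ (forall y z, 0 <= k y z) /\ exists y z, k y z <> 0.
Definition Good {Y Z : Type} (DZ : gset Z) (fs : list (Y -> R)) (k : Y -> Z -> R) : Prop :=
  (exists g B, DZ g /\ In (ind B) fs /\ forall y z, k y z = g z * ind B y) \/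
  (exists f C, In f fs /\ (exists z, C z) /\ forall y z, k y z = f y * ind C z) \/
  ((forall y z, 0 <= k y z) /\ exists z0, In (fun y => k y z0) fs).
Definition comb2 {Y Z : Type} (l : list (R * (Y -> Z -> R))) (y : Y) (z : Z) : R :=
  fold_right (fun p acc => fst p * snd p y z + acc) 0 l.

Lemma Good_mono {Y Z} (DZ : gset Z) fs a (k : Y -> Z -> R) : Good DZ fs k -> Good DZ (a :: fs) k.
Proof.
  intros [[g [B [H1 [H2 H3]]]]|[[f [C [H1 [H2 H3]]]]|[H1 [z0 H2]]]].
  - left; exists g, B; repeat split; auto; right; auto.
  - right; left; exists f, C; repeat split; auto; right; auto.
  - right; right; split; auto; exists z0; right; auto.
Qed.

Lemma build {Y Z} (DY : gset Y) (DZ : gset Z) (hY : coherent DY) (l : list (R * (Y -> Z -> R))) :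
  Forall (fun p => 0 < fst p /\ (TA DZ (snd p) \/ TB DY (snd p) \/ TG (snd p))) l ->
  exists fs, Forall DY fs /\ Forall (fun p => 0 < fst p /\ Good DZ fs (snd p)) l.
Proof.
  induction l as [|p l IH]; intros Hall.
  - exists nil; split; constructor.
  - apply Forall_cons_iff in Hall as [[Hp Hc] Hall]. destruct (IH Hall) as [fs [Hfs Hl]].
    assert (Hmono : forall a, Forall (fun p => 0 < fst p /\ Good DZ (a :: fs) (snd p)) l).
    { intros a. eapply Forall_impl; [|exact Hl]. intros q [? ?]; split; auto; apply Good_mono; auto. }
    destruct Hc as [[g [B [Hg [HB Hk]]]]|[[f [C [Hf [HC Hk]]]]|[[M HM] [Hn [y0 [z0 Hyz]]]]]].
    + exists (ind B :: fs). split; [constructor; auto; apply (coh_ind DY hY); auto|].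
      constructor; auto. split; auto. left. exists g, B. repeat split; auto. left; auto.
    + exists (f :: fs). split; [constructor; auto|].
      constructor; auto. split; auto. right; left. exists f, C. repeat split; auto. left; auto.
    + exists ((fun y => snd p y z0) :: fs). split.
      * constructor; auto. apply (coh_pos DY hY).
        -- exists M; intros y; apply HM.
        -- intros y; apply Hn.
        -- exists y0; auto.
      * constructor; auto. split; auto. right; right. split; auto. exists z0; left; auto.
Qed.

Lemma comb2_cons {Y Z} p (l : list (R * (Y -> Z -> R))) y z :
  comb2 (p :: l) y z = fst p * snd p y z + comb2 l y z.
Proof. reflexivity. Qed.

Lemma Cl_total {Y Z} (DZ : gset Z) (hZ : coherent DZ) (mu : list (R * Y)) (fs : list (Y -> R)) :
  Forall (fun q => 0 < fst q) mu -> (forall g, In g fs -> 0 < ev mu g) ->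
  forall l : list (R * (Y -> Z -> R)), l <> nil ->
  Forall (fun p => 0 < fst p /\ Good DZ fs (snd p)) l ->
  Cl DZ (fun z => ev mu (fun y => comb2 l y z)).
Proof.
  intros Hmu Hfs l. induction l as [|p l IH]; intros Hne Hall; [congruence|].
  apply Forall_cons_iff in Hall as [[Hp Hg] Hall].
  assert (Hterm : Cl DZ (fun z => fst p * ev mu (fun y => snd p y z))).
  { destruct Hg as [[g [B [H1 [H2 H3]]]]|[[f [C [H1 [[z0 H2] H3]]]]|[H1 [z0 H2]]]].
    - left. exists (fun z => (fst p * ev mu (ind B)) * g z). split.
      + apply (coh_scale DZ hZ); auto. apply Rmult_lt_0_compat; auto.
      + intros z. rewrite (ev_ext mu (fun y => snd p y z) (fun y => ind B y * g z)); [|intros y; rewrite H3; ring].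
        rewrite ev_mulr. right; ring.
    - right. assert (E : forall z, ev mu (fun y => snd p y z) = ev mu f * ind C z).
      { intros z. rewrite (ev_ext mu (fun y => snd p y z) (fun y => f y * ind C z)); [|intros y; rewrite H3; ring].
        apply ev_mulr. }
      assert (Hf : 0 < ev mu f) by auto. split.
      + intros z. rewrite E. pose proof (ind_nonneg C z).
        apply Rmult_le_pos; [lra|]. apply Rmult_le_pos; lra.
      + exists z0. rewrite E, ind_in; auto. rewrite Rmult_1_r. apply Rmult_lt_0_compat; auto.
    - right. split.
      + intros z. apply Rmult_le_pos; [lra|]. apply ev_nonneg; auto.
      + exists z0. apply Rmult_lt_0_compat; [auto| apply (Hfs _ H2)]. }
  assert (E : forall z, fst p * ev mu (fun y => snd p y z) + ev mu (fun y => comb2 l y z)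
                 = ev mu (fun y => comb2 (p :: l) y z)).
  { intros z. rewrite <- ev_lin. apply ev_ext. intros y. reflexivity. }
  destruct l as [|p' l'].
  - apply (Cl_ext DZ (fun z => fst p * ev mu (fun y => snd p y z) + 0)).
    + apply Cl_add_nonneg; auto. intros; lra.
    + intros z. rewrite <- E. f_equal. rewrite (ev_ext mu _ (fun _ => 0)); [apply eq_sym, ev_zero|].
      intros; reflexivity.
  - apply (Cl_ext DZ _ _ (Cl_add DZ hZ _ _ Hterm (IH ltac:(congruence) Hall))). exact E.
Qed.

Lemma generic {Y Z : Type} (DY : gset Y) (DZ : gset Z) (hY : coherent DY) (hZ : coherent DZ)
  (l : list (R * (Y -> Z -> R))) (extra : list (Y -> R)) :
  l <> nil ->
  Forall (fun p => 0 < fst p /\ (TA DZ (snd p) \/ TB DY (snd p) \/ TG (snd p))) l ->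
  Forall DY extra ->
  exists mu : list (R * Y), Forall (fun q => 0 < fst q) mu /\
    (forall e, In e extra -> 0 < ev mu e) /\
    Cl DZ (fun z => ev mu (fun y => comb2 l y z)).
Proof.
  intros Hne Hall Hex.
  destruct (build DY DZ hY l Hall) as [fs [Hfs Hl]].
  assert (HH : Hfam (fs ++ extra)) by (apply (Hfam_of DY hY); apply Forall_app; auto).
  destruct (minimax _ Y (fs ++ extra) eq_refl HH) as [mu [Hmu Hpos]].
  exists mu. split; auto. split.
  - intros e He. apply Hpos. apply in_or_app; right; auto.
  - apply (Cl_total DZ hZ mu fs); auto. intros g Hg. apply Hpos. apply in_or_app; left; auto.
Qed.

Lemma posi_ev {X} (A : gset X) h (l : list (R * (X -> R))) :
  l <> nil -> Forall (fun p => 0 < fst p /\ A (snd p)) l ->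
  (forall x, h x = ev l (fun g => g x)) -> posi A h.
Proof.
  intros Hne Hall Heq. exists l. split; auto. split; auto.
  apply functional_extensionality. intros x. rewrite Heq. reflexivity.
Qed.

Lemma posi_elim {X} (A : gset X) h : posi A h ->
  exists l : list (R * (X -> R)), l <> nil /\ Forall (fun p => 0 < fst p /\ A (snd p)) l /\
    forall x, h x = ev l (fun g => g x).
Proof.
  intros [l [Hne [Hall ->]]]. exists l. repeat split; auto.
Qed.

Lemma posi_single {X} (A : gset X) k : A k -> posi A k.
Proof.
  intros Hk. apply (posi_ev A k ((1, k) :: nil)); [discriminate| |].
  - constructor; [simpl; split; [lra| auto]| constructor].
  - intros x. rewrite ev_cons, ev_nil. cbn. ring.
Qed.

Lemma comb2_m1 {X1 X2 : Type} (l : list (R * (X1 * X2 -> R))) y z :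
  comb2 (map (fun p => (fst p, fun (y : X1) (z : X2) => snd p (y, z))) l) y z = ev l (fun g => g (y, z)).
Proof. unfold comb2, ev. induction l as [|p l IH]; simpl; [reflexivity|]. rewrite IH. reflexivity. Qed.

Lemma comb2_m2 {X1 X2 : Type} (l : list (R * (X1 * X2 -> R))) y z :
  comb2 (map (fun p => (fst p, fun (y : X2) (z : X1) => snd p (z, y))) l) y z = ev l (fun g => g (z, y)).
Proof. unfold comb2, ev. induction l as [|p l IH]; simpl; [reflexivity|]. rewrite IH. reflexivity. Qed.

Lemma TG_of {X1 X2 : Type} (k : X1 * X2 -> R) : Gpos k ->
  TG (fun y z => k (y, z)) /\ TG (fun y z => k (z, y)).
Proof.
  intros [[M HM] [Hn [[x1 x2] Hx]]]. split; repeat split.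
  - exists M; intros; apply HM.
  - intros; apply Hn.
  - exists x1, x2; auto.
  - exists M; intros; apply HM.
  - intros; apply Hn.
  - exists x2, x1; auto.
Qed.

Theorem proposition41 (X1 X2 : Type) (ne1 : inhabited X1) (ne2 : inhabited X2)
  (Bs1 : (X1 -> Prop) -> Prop) (Bs2 : (X2 -> Prop) -> Prop)
  (hB1 : forall B, Bs1 B -> exists x, B x)
  (hB2 : forall B, Bs2 B -> exists x, B x)
  (D1 : gset X1) (D2 : gset X2)
  (hD1 : coherent D1) (hD2 : coherent D2) :
  indep_product Bs1 Bs2 D1 D2 (indep_natext Bs1 Bs2 D1 D2).
Proof.
  set (A := gunion (gunion (A12 Bs1 D2) (A21 Bs2 D1)) (@Gpos (X1 * X2))).
  set (D := indep_natext Bs1 Bs2 D1 D2).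
  assert (HD : forall h, D h <-> posi A h) by (intros; tauto).
  assert (ne1' : forall B : X1 -> Prop, Bs1 B \/ B = (fun _ => True) -> exists x, B x).
  { intros B [HB| ->]; [auto| destruct ne1 as [x]; exists x; auto]. }
  assert (ne2' : forall B : X2 -> Prop, Bs2 B \/ B = (fun _ => True) -> exists x, B x).
  { intros B [HB| ->]; [auto| destruct ne2 as [x]; exists x; auto]. }
  assert (cls1 : forall k, A k -> TA D2 (fun y z => k (y, z)) \/ TB D1 (fun y z => k (y, z))
                                 \/ TG (fun (y : X1) (z : X2) => k (y, z))).
  { intros k [[[f2 [B1 [Hf [HB ->]]]]|[f1 [B2 [Hf [HB ->]]]]]|HG].
    - left. exists f2, B1. refine (conj Hf (conj (ne1' _ HB) _)); intros; reflexivity.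
    - right; left. exists f1, B2. refine (conj Hf (conj (ne2' _ HB) _)); intros; reflexivity.
    - right; right. apply (TG_of k HG). }
  assert (cls2 : forall k, A k -> TA D1 (fun y z => k (z, y)) \/ TB D2 (fun y z => k (z, y))
                                 \/ TG (fun (y : X2) (z : X1) => k (z, y))).
  { intros k [[[f2 [B1 [Hf [HB ->]]]]|[f1 [B2 [Hf [HB ->]]]]]|HG].
    - right; left. exists f2, B1. refine (conj Hf (conj (ne1' _ HB) _)); intros; reflexivity.
    - left. exists f1, B2. refine (conj Hf (conj (ne2' _ HB) _)); intros; reflexivity.
    - right; right. apply (TG_of k HG). }
  assert (HD4 : forall h, (forall x, h x <= 0) -> ~ D h).
  { intros h Hle Hh. apply HD, posi_elim in Hh as [l [Hne [Hall Heq]]].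
    set (l1 := map (fun p => (fst p, fun (y : X1) (z : X2) => snd p (y, z))) l).
    destruct (generic D1 D2 hD1 hD2 l1 nil) as [mu [Hmu [_ HCl]]].
    - unfold l1; destruct l; [congruence| discriminate].
    - unfold l1; apply Forall_map. eapply Forall_impl; [|exact Hall].
      intros p [Hp Hk]; split; auto. apply cls1; auto.
    - constructor.
    - destruct (Cl_pos D2 hD2 _ HCl) as [z Hz].
      assert (ev mu (fun y => comb2 l1 y z) <= 0); [|lra].
      apply ev_nonpos; auto. intros y. unfold l1; rewrite comb2_m1, <- Heq. apply Hle. }
  assert (K1 : forall (f : X1 -> R) h (B2 : X2 -> Prop), (exists y, B2 y) -> bounded f -> D h ->
                 (forall x1 x2, h (x1, x2) = f x1 * ind B2 x2) -> D1 f).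
  { intros f h B2 HB2 Hbf Hh Hform. apply HD, posi_elim in Hh as [l [Hne [Hall Heq]]].
    set (l2 := map (fun p => (fst p, fun (y : X2) (z : X1) => snd p (z, y))) l).
    destruct (generic D2 D1 hD2 hD1 l2 (ind B2 :: nil)) as [mu [Hmu [Hex HCl]]].
    - unfold l2; destruct l; [congruence| discriminate].
    - unfold l2; apply Forall_map. eapply Forall_impl; [|exact Hall].
      intros p [Hp Hk]; split; auto. apply cls2; auto.
    - constructor; [apply (coh_ind D2 hD2); auto| constructor].
    - assert (Hc : 0 < ev mu (ind B2)) by (apply Hex; left; auto).
      assert (HCl' : Cl D1 (fun z => ev mu (ind B2) * f z)).
      { apply (Cl_ext D1 _ _ HCl). intros z.
        rewrite (ev_ext mu (fun y => comb2 l2 y z) (fun y => f z * ind B2 y)).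
        - rewrite ev_mull. ring.
        - intros y. unfold l2; rewrite comb2_m2, <- Heq. apply Hform. }
      apply (Cl_in D1 hD1) in HCl'.
      + apply (coh_ext D1 (fun z => / ev mu (ind B2) * (ev mu (ind B2) * f z))).
        * apply (coh_scale D1 hD1); auto. apply Rinv_0_lt_compat; auto.
        * intros z. field. lra.
      + destruct Hbf as [M HM]. exists (Rabs (ev mu (ind B2)) * M). intros z.
        rewrite Rabs_mult. apply Rmult_le_compat_l; [apply Rabs_pos| auto]. }
  assert (K2 : forall (f : X2 -> R) h (B1 : X1 -> Prop), (exists x, B1 x) -> bounded f -> D h ->
                 (forall x1 x2, h (x1, x2) = f x2 * ind B1 x1) -> D2 f).
  { intros f h B1 HB1 Hbf Hh Hform. apply HD, posi_elim in Hh as [l [Hne [Hall Heq]]].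
    set (l1 := map (fun p => (fst p, fun (y : X1) (z : X2) => snd p (y, z))) l).
    destruct (generic D1 D2 hD1 hD2 l1 (ind B1 :: nil)) as [mu [Hmu [Hex HCl]]].
    - unfold l1; destruct l; [congruence| discriminate].
    - unfold l1; apply Forall_map. eapply Forall_impl; [|exact Hall].
      intros p [Hp Hk]; split; auto. apply cls1; auto.
    - constructor; [apply (coh_ind D1 hD1); auto| constructor].
    - assert (Hc : 0 < ev mu (ind B1)) by (apply Hex; left; auto).
      assert (HCl' : Cl D2 (fun z => ev mu (ind B1) * f z)).
      { apply (Cl_ext D2 _ _ HCl). intros z.
        rewrite (ev_ext mu (fun y => comb2 l1 y z) (fun y => f z * ind B1 y)).
        - rewrite ev_mull. ring.
        - intros y. unfold l1; rewrite comb2_m1, <- Heq. apply Hform. }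
      apply (Cl_in D2 hD2) in HCl'.
      + apply (coh_ext D2 (fun z => / ev mu (ind B1) * (ev mu (ind B1) * f z))).
        * apply (coh_scale D2 hD2); auto. apply Rinv_0_lt_compat; auto.
        * intros z. field. lra.
      + destruct Hbf as [M HM]. exists (Rabs (ev mu (ind B1)) * M). intros z.
        rewrite Rabs_mult. apply Rmult_le_compat_l; [apply Rabs_pos| auto]. }
  assert (DA21 : forall f (B2 : X2 -> Prop), D1 f -> Bs2 B2 \/ B2 = (fun _ => True) ->
                   D (fun z => f (fst z) * ind B2 (snd z))).
  { intros f B2 Hf HB. apply HD, posi_single. left; right. exists f, B2. auto. }
  assert (DA12 : forall f (B1 : X1 -> Prop), D2 f -> Bs1 B1 \/ B1 = (fun _ => True) ->
                   D (fun z => f (snd z) * ind B1 (fst z))).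
  { intros f B1 Hf HB. apply HD, posi_single. left; left. exists f, B1. auto. }
  assert (indT1 : forall x : X1, ind (fun _ : X1 => True) x = 1) by (intros; apply ind_in; auto).
  assert (indT2 : forall x : X2, ind (fun _ : X2 => True) x = 1) by (intros; apply ind_in; auto).
  assert (M1 : forall f, marg1 D f <-> D1 f).
  { intros f. split.
    - intros [Hb Hh]. apply (K1 f _ (fun _ => True) ltac:(destruct ne2 as [y]; exists y; auto) Hb Hh).
      intros x1 x2. cbn. rewrite indT2. ring.
    - intros Hf. split; [apply (coh_bounded D1 hD1); auto|].
      replace (fun z : X1 * X2 => f (fst z)) with (fun z : X1 * X2 => f (fst z) * ind (fun _ => True) (snd z)).
      + apply DA21; auto.
      + apply functional_extensionality; intros z. rewrite indT2. ring. }
  assert (M2 : forall f, marg2 D f <-> D2 f).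
  { intros f. split.
    - intros [Hb Hh]. apply (K2 f _ (fun _ => True) ltac:(destruct ne1 as [y]; exists y; auto) Hb Hh).
      intros x1 x2. cbn. rewrite indT1. ring.
    - intros Hf. split; [apply (coh_bounded D2 hD2); auto|].
      replace (fun z : X1 * X2 => f (snd z)) with (fun z : X1 * X2 => f (snd z) * ind (fun _ => True) (fst z)).
      + apply DA12; auto.
      + apply functional_extensionality; intros z. rewrite indT1. ring. }
  assert (C1 : forall B2, Bs2 B2 -> forall f, marg1_cond D B2 f <-> D1 f).
  { intros B2 HB f. split.
    - intros [Hb Hh]. apply (K1 f _ B2 (hB2 B2 HB) Hb Hh). intros; reflexivity.
    - intros Hf. split; [apply (coh_bounded D1 hD1); auto| apply DA21; auto]. }
  assert (C2 : forall B1, Bs1 B1 -> forall f, marg2_cond D B1 f <-> D2 f).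
  { intros B1 HB f. split.
    - intros [Hb Hh]. apply (K2 f _ B1 (hB1 B1 HB) Hb Hh). intros; reflexivity.
    - intros Hf. split; [apply (coh_bounded D2 hD2); auto| apply DA12; auto]. }
  assert (Hcoh : coherent D).
  { split; [|split; [|split; [|split]]].
    - intros h Hh. apply HD, posi_elim in Hh as [l [Hne [Hall Heq]]].
      destruct (bounded_comb l) as [M HM].
      + eapply Forall_impl; [|exact Hall]. intros p [_ Hk].
        destruct Hk as [[[f2 [B1 [Hf [HB ->]]]]|[f1 [B2 [Hf [HB ->]]]]]|HG].
        * destruct (coh_bounded D2 hD2 f2 Hf) as [M HM]. exists M. intros z.
          eapply Rle_trans; [apply Rabs_mul_ind| apply HM].
        * destruct (coh_bounded D1 hD1 f1 Hf) as [M HM]. exists M. intros z.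
          eapply Rle_trans; [apply Rabs_mul_ind| apply HM].
        * apply HG.
      + exists M. intros x. rewrite Heq. apply HM.
    - intros f Hb Hn Hx. apply HD, posi_single. right. split; auto.
    - intros f lam Hf Hlam. apply HD, posi_elim in Hf as [l [Hne [Hall Heq]]].
      apply HD, (posi_ev A _ (map (fun q => (lam * fst q, snd q)) l)).
      + destruct l; [congruence| discriminate].
      + apply Forall_map. eapply Forall_impl; [|exact Hall]. intros p [Hp Hk]. cbn.
        split; auto. apply Rmult_lt_0_compat; auto.
      + intros x. rewrite ev_scale, Heq. reflexivity.
    - intros f g Hf Hg. apply HD, posi_elim in Hf as [l [Hne [Hall Heq]]].
      apply HD, posi_elim in Hg as [l' [Hne' [Hall' Heq']]].
      apply HD, (posi_ev A _ (l ++ l')).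
      + destruct l; [congruence| discriminate].
      + apply Forall_app; auto.
      + intros x. rewrite ev_app, Heq, Heq'. reflexivity.
    - intros f _ Hle. apply HD4; auto. }
  split; [split; [exact Hcoh| split]| split].
  - intros B2 HB f. rewrite (C1 B2 HB f), M1. tauto.
  - intros B1 HB f. rewrite (C2 B1 HB f), M2. tauto.
  - intros f. apply M1.
  - intros f. apply M2.
Qed.
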